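(* Let $D\in(0,1]$ and define $\mathcal F_{\bm B}:=\{r_2\in[\underline x,\bar x]:(\bm R\bm c^m)^\top G_{\bm B}(r_2)\le D\}$, $\mathcal F_{\bm A}:=\{(r_1,r_3,p)\in F:(\bm R\bm c^m)^\top G_{\bm A}(r_1,r_3,p)\le D\}$, $\mathcal F_{\bm B}^{=}:=\{r_2\in[\underline x,\bar x]:(\bm R\bm c^m)^\top G_{\bm B}(r_2)=D\}$ and $\mathcal F_{\bm A}^{=}:=\{(r_1,r_3,p)\in F:(\bm R\bm c^m)^\top G_{\bm A}(r_1,r_3,p)=D\}$. Then $$\max_{r_2\in\mathcal F_{\bm B}}(\bm R\bm v_1^m)^\top G_{\bm B}(r_2)=\max_{r_2\in\mathcal F_{\bm B}^{=}}(\bm R\bm v_1^m)^\top G_{\bm B}(r_2),\qquad \max_{(r_1,r_3,p)\in\mathcal F_{\bm A}}(\bm R\bm v_2^m)^\top G_{\bm A}(r_1,r_3,p)=\max_{(r_1,r_3,p)\in\mathcal F_{\bm A}^{=}}(\bm R\bm v_2^m)^\top G_{\bm A}(r_1,r_3,p).$$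
   Context: Let $N\ge3$ be an integer and $\underline x=x_1<x_2<\cdots<x_N=\bar x$ real numbers; $\bm e$ denotes the all-ones vector of the appropriate dimension. Define $\bm g:[\underline x,\bar x]\to\mathbb R^{N-1}$ by $\bm g(x_1)=\bm 0$ and, for $x\in(x_i,x_{i+1}]$ ($i\in\{1,\dots,N-1\}$), $\bm g(x)=(1,\dots,1,\frac{x-x_i}{x_{i+1}-x_i},0,\dots,0)$ with the first $i-1$ entries equal to $1$, the $i$-th entry $\frac{x-x_i}{x_{i+1}-x_i}$ and the last $N-1-i$ entries $0$. For $\bm v\in\mathbb R^{N-2}$ let $\bm R\bm v:=(v_1,\dots,v_{N-2},1-\bm e^\top\bm v)\in\mathbb R^{N-1}$. Define $G_{\bm A}(r_1,r_3,p):=(1-p)\bm g(r_1)+p\,\bm g(r_3)$, $G_{\bm B}(r_2):=\bm g(r_2)$, and $F:=\{(r_1,r_3,p)\in[\underline x,\bar x]\times[\underline x,\bar x]\times[0,1]: r_1\le r_3\}$. Fix $m\ge1$ and data $(r_1^k,r_3^k,p^k)\in F$, $r_2^k\in[\underline x,\bar x]$, $l_k\in\{-1,1\}$ for $k=1,\dots,m-1$. Let $\mathcal V^{m-1}:=\{\bm v\in\mathbb R^{N-2}: v_i\ge0\ (i=1,\dots,N-2),\ \bm e^\top\bm v\le1,\ l_k(\bm R\bm v)^\top(G_{\bm A}(r_1^k,r_3^k,p^k)-G_{\bm B}(r_2^k))\le0\ (k=1,\dots,m-1)\}$, assumed to have nonempty interior; write its defining inequalities as $\tilde{\bm a}_i^\top\bm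 v\le\tilde b_i$. Let $\bm c^m$ be its analytic center, i.e. the maximizer over the interior of $\mathcal V^{m-1}$ of $\sum_i\log(\tilde b_i-\tilde{\bm a}_i^\top\bm v)$; in particular $c^m_i>0$ for all $i$ and $1-\bm e^\top\bm c^m>0$. Let $\bm H:=\sum_i\tilde{\bm a}_i\tilde{\bm a}_i^\top/(\tilde b_i-\tilde{\bm a}_i^\top\bm c^m)^2$ (Sonnevend's inner ellipsoid is $\{\bm v:(\bm v-\bm c^m)^\top\bm H(\bm v-\bm c^m)\le1\}$), and let $\bm v_1^m,\bm v_2^m\in\mathcal V^{m-1}$ be the two points (in some fixed order) where the line through $\bm c^m$ in the direction of the longest axis of this ellipsoid meets the boundary of $\mathcal V^{m-1}$. *)

(* Defs.v *)
From HB Require Import structures.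
From mathcomp Require Import all_boot all_order all_algebra.
From mathcomp Require Import all_classical all_reals all_analysis.
Set Implicit Arguments. Unset Strict Implicit. Unset Printing Implicit Defensive.
Import Order.TTheory GRing.Theory Num.Theory.
Local Open Scope ring_scope.

Section Defs.
Variables (R : realType) (N : nat).
(* grid points: x 0 < x 1 < ... < x (N-1)  (0-based; the paper's x_1,...,x_N);
   values of x at indices >= N are irrelevant *)
Variable x : nat -> R.

Definition xlow : R := x 0.
Definition xup : R := x N.-1.

Definition dotc k (u w : 'cV[R]_k) : R := \sum_i u i 0 * w i 0.

(* (0-based) component j of g(t): it is 0 if t <= x_j, 1 if t >= x_{j+1},
   and (t - x_j)/(x_{j+1} - x_j) in between.  On [x_1, x_N] this is exactly the
   paper's piecewise definition of g. *)
Definition gcomp (t : R) (j : nat) : R :=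
  if t <= x j then 0
  else if x j.+1 <= t then 1
  else (t - x j) / (x j.+1 - x j).

Definition gvec (t : R) : 'cV[R]_(N.-1) := \col_(j < N.-1) gcomp t j.

(* R v = (v_1, ..., v_{N-2}, 1 - e^T v) *)
Definition Rmap (v : 'cV[R]_(N.-2)) : 'cV[R]_(N.-1) :=
  \col_(i < N.-1)
    (if (insub (val i) : option 'I_(N.-2)) is Some j then v j 0
     else 1 - \sum_j v j 0).

Definition GA (r1 r3 p : R) : 'cV[R]_(N.-1) := (1 - p) *: gvec r1 + p *: gvec r3.
Definition GB (r2 : R) : 'cV[R]_(N.-1) := gvec r2.

Definition inF (r1 r3 p : R) : Prop :=
  [/\ xlow <= r1 <= xup, xlow <= r3 <= xup, 0 <= p <= 1 & r1 <= r3].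

Variable m : nat.
(* data (r_1^k, r_3^k, p^k), r_2^k, l_k for k = 1..m-1 (0-based index k : 'I_(m-1)) *)
Variables (r1d r3d pd r2d ld : 'I_(m.-1) -> R).

Definition wk (k : 'I_(m.-1)) : 'cV[R]_(N.-1) :=
  GA (r1d k) (r3d k) (pd k) - GB (r2d k).

Definition inV (v : 'cV[R]_(N.-2)) : Prop :=
  [/\ forall i, 0 <= v i 0,
      \sum_i v i 0 <= 1
    & forall k, ld k * dotc (Rmap v) (wk k) <= 0].

(* The defining inequalities  a_i^T v <= b_i  of V^{m-1}, as pairs (a_i, b_i):
   -v_i <= 0 ;  e^T v <= 1 ;  l_k (R v)^T w_k <= 0 written in affine form using
   (R v)^T w = (R 0)^T w + sum_j v_j ((R e_j)^T w - (R 0)^T w). *)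
Definition aK (k : 'I_(m.-1)) : 'cV[R]_(N.-2) :=
  \col_(j < N.-2) (ld k * (dotc (Rmap (delta_mx j 0)) (wk k) - dotc (Rmap 0) (wk k))).
Definition bK (k : 'I_(m.-1)) : R := - (ld k * dotc (Rmap 0) (wk k)).

Definition constraints : seq ('cV[R]_(N.-2) * R) :=
  [seq (- (delta_mx i 0 : 'cV[R]_(N.-2)), 0) | i <- enum 'I_(N.-2)]
  ++ [:: (const_mx 1, 1)]
  ++ [seq (aK k, bK k) | k <- enum 'I_(m.-1)].

Definition slack (ab : 'cV[R]_(N.-2) * R) (v : 'cV[R]_(N.-2)) : R :=
  ab.2 - dotc ab.1 v.

Definition strictV (v : 'cV[R]_(N.-2)) : Prop :=
  forall ab, ab \in constraints -> 0 < slack ab v.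

Definition logbarrier (v : 'cV[R]_(N.-2)) : R :=
  \sum_(ab <- constraints) ln (slack ab v).

Definition analytic_center (c : 'cV[R]_(N.-2)) : Prop :=
  strictV c /\ forall v, strictV v -> logbarrier v <= logbarrier c.

Definition Hmat (c : 'cV[R]_(N.-2)) : 'M[R]_(N.-2) :=
  \sum_(ab <- constraints) ((slack ab c) ^- 2) *: (ab.1 *m ab.1^T).

Definition in_ellipsoid (c v : 'cV[R]_(N.-2)) : Prop :=
  ((v - c)^T *m Hmat c *m (v - c)) 0 0 <= 1.

(* d (nonzero) is a direction of the longest axis of the ellipsoid: the line through
   the center in direction d contains a point of the ellipsoid at maximal distance
   from the center (an endpoint of the longest axis). *)
Definition longest_axis_dir (c d : 'cV[R]_(N.-2)) : Prop :=
  d != 0 /\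
  exists t : R, in_ellipsoid c (c + t *: d) /\
    forall q, in_ellipsoid c q -> dotc (q - c) (q - c) <= dotc (t *: d) (t *: d).

Definition boundaryV (v : 'cV[R]_(N.-2)) : Prop :=
  inV v /\ forall e : R, 0 < e -> exists w, dotc (w - v) (w - v) < e /\ ~ inV w.

Definition on_line (c d v : 'cV[R]_(N.-2)) : Prop := exists t : R, v = c + t *: d.

Definition is_max (T : Type) (S : T -> Prop) (f : T -> R) (M : R) : Prop :=
  (exists y, S y /\ f y = M) /\ forall y, S y -> f y <= M.

End Defs.

(* Main.v *)
Require Import Defs.
From HB Require Import structures.
From mathcomp Require Import all_boot all_order all_algebra.
From mathcomp Require Import all_classical all_reals all_analysis.
Import Order.TTheory GRing.Theory Num.Theory.
Local Open Scope ring_scope.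

Module Aux.
Import numFieldNormedType.Exports.
Set Implicit Arguments. Unset Strict Implicit.


Section Aux.
Variables (R : realType) (N : nat) (x : nat -> R).
Hypothesis hx : forall i, (i.+1 < N)%N -> x i < x i.+1.

Lemma xmono i k : (i <= k)%N -> (k < N)%N -> x i <= x k.
Proof.
move=> ik kN; elim: k ik kN => [|k IH]; first by rewrite leqn0 => /eqP ->.
rewrite leq_eqVlt => /orP[/eqP -> //|ik] kN.
exact: (le_trans (IH ik (ltnW kN)) (ltW (hx kN))).
Qed.

Lemma gcompE t j : (j.+1 < N)%N ->
  gcomp x t j = Num.min 1 (Num.max 0 ((t - x j) / (x j.+1 - x j))).
Proof.
move=> jN; have h := hx jN; have d0 : 0 < x j.+1 - x j by rewrite subr_gt0.
rewrite /gcomp; case: ifP => [tj|/negbT]; rewrite ?(negbTE (lt_geF _)).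
  have : (t - x j) / (x j.+1 - x j) <= 0.
    by rewrite pmulr_lle0 ?invr_gt0 // subr_le0.
  by move=> H; rewrite (max_idPl H) (min_idPr ler01).
rewrite -ltNge => tj; case: ifP => [jt|/negbT].
  have H : 1 <= (t - x j) / (x j.+1 - x j) by rewrite ler_pdivlMr // mul1r lerB.
  by rewrite (max_idPr (le_trans ler01 H)) (min_idPl H).
rewrite -ltNge => jt.
have H0 : 0 <= (t - x j) / (x j.+1 - x j) by rewrite divr_ge0 // subr_ge0 ltW.
have H1 : (t - x j) / (x j.+1 - x j) <= 1 by rewrite ler_pdivrMr // mul1r lerB // ltW.
by rewrite (max_idPr H0) (min_idPr H1).
Qed.

Lemma gcomp_cont j : (j.+1 < N)%N -> continuous (fun t : R => gcomp x t j).
Proof.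
move=> jN; have -> : (fun t : R => gcomp x t j) =
  (fun _ : R => 1 : R) \min ((fun _ : R => 0 : R) \max (fun t : R => (t - x j) * (x j.+1 - x j)^-1)).
  by apply: funext => t; rewrite gcompE.
move=> t; apply: continuous_min; first exact: cvg_cst.
apply: continuous_max; first exact: cvg_cst.
apply: continuousM; last exact: cvg_cst.
apply: continuousB; [exact: cvg_id | exact: cvg_cst].
Qed.

Lemma gcomp_mono j t s : (j.+1 < N)%N -> t <= s -> gcomp x t j <= gcomp x s j.
Proof.
move=> jN ts; rewrite !gcompE //; apply: le_min2 => //; apply: le_max2 => //.
by rewrite ler_pM2r ?invr_gt0 ?subr_gt0 ?(hx jN) // lerB.
Qed.

End Aux.


Lemma sumRmap (R : realType) N (v : 'cV[R]_(N.-2)) : (2 <= N)%N ->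
  \sum_(i < N.-1) @Rmap R N v i 0 = 1.
Proof.
case: N v => [|[|n]] v //= _.
rewrite big_ord_recr /= !mxE.
case: insubP => [j|]; first by move=> /=; rewrite ltnn.
move=> _.
have -> : \sum_(i < n) (@Rmap R n.+2 v) (widen_ord (leqnSn n) i) 0 = \sum_j v j 0.
  apply: eq_bigr => i _; rewrite !mxE.
case: insubP => [j _ hj|]; last by rewrite /= ltn_ord.
by congr (v _ 0); apply: val_inj.
by rewrite addrC subrK.
Qed.

Section Aux2.
Variables (R : realType) (N : nat) (x : nat -> R).
Hypothesis hx : forall i, (i.+1 < N)%N -> x i < x i.+1.

Lemma iN (i : 'I_(N.-1)) : (i.+1 < N)%N.
Proof. by case: i => i /=; case: N => //= n; rewrite ltnS. Qed.

Lemma dotc_GA (u : 'cV[R]_(N.-1)) r1 r3 p :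
  dotc u (GA N x r1 r3 p) = (1 - p) * dotc u (gvec N x r1) + p * dotc u (gvec N x r3).
Proof.
rewrite /dotc /GA !mulr_sumr -big_split; apply: eq_bigr => i _; rewrite !mxE.
by rewrite mulrDr !mulrA [u i 0 * _]mulrC [u i 0 * p]mulrC.
Qed.

Lemma Fv_cont (u : 'cV[R]_(N.-1)) : continuous (fun t : R => dotc u (gvec N x t)).
Proof.
rewrite /dotc; apply: continuous_big; first exact: add_continuous.
move=> i _.
have -> : (fun t : R => u i 0 * gvec N x t i 0) = (fun t : R => u i 0 * gcomp x t i).
  by apply: funext => t; rewrite mxE.
move=> t; apply: cvgM; first exact: cvg_cst.
exact: (gcomp_cont hx (iN i)).
Qed.

Lemma Fv_mono (u : 'cV[R]_(N.-1)) t s : (forall i, 0 <= u i 0) -> t <= s ->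
  dotc u (gvec N x t) <= dotc u (gvec N x s).
Proof.
move=> u0 ts; rewrite /dotc; apply: ler_sum => i _; rewrite !mxE.
by rewrite ler_wpM2l // (gcomp_mono hx (iN i) ts).
Qed.

Lemma Fv_up (v : 'cV[R]_(N.-2)) : (2 <= N)%N ->
  dotc (@Rmap R N v) (gvec N x (xup N x)) = 1.
Proof.
move=> N2; rewrite -(sumRmap v N2) /dotc; apply: eq_bigr => i _.
rewrite !mxE /gcomp.
have h1 : x i.+1 <= xup N x.
  apply: (xmono hx); last by case: (N) N2.
  by case: (N) i => //= n i; rewrite ltnS.
have h2 : x i < xup N x by apply: lt_le_trans h1; apply: hx; exact: iN.
by rewrite (lt_geF h2) h1 mulr1.
Qed.

Lemma Fv_low (u : 'cV[R]_(N.-1)) : dotc u (gvec N x (xlow x)) = 0.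
Proof.
rewrite /dotc big1 // => i _; rewrite !mxE /gcomp.
by rewrite (xmono hx (leq0n i) (ltnW (iN i))) mulr0.
Qed.

End Aux2.



Lemma Rmap_ge0 (R : realType) N (v : 'cV[R]_(N.-2)) :
  (forall i, 0 <= v i 0) -> \sum_i v i 0 <= 1 -> forall i, 0 <= @Rmap R N v i 0.
Proof.
move=> h0 h1 i; rewrite mxE; case: insubP => [j _ _|_]; first exact: h0.
by rewrite subr_ge0.
Qed.

Lemma cont3 (R : realType) (F : R -> R) : continuous F ->
  continuous (fun q : R * R * R => (1 - q.2) * F q.1.1 + q.2 * F q.1.2).
Proof.
move=> cF q; apply: cvgD; apply: cvgM.
- by apply: cvgB; [exact: cvg_cst | exact: cvg_snd].
- apply: (continuous_comp (f := fun q : R * R * R => q.1.1)); last exact: cF.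
  apply: (continuous_comp (f := fst)); first exact: cvg_fst.
  exact: cvg_fst.
- exact: cvg_snd.
- apply: (continuous_comp (f := fun q : R * R * R => q.1.2)); last exact: cF.
  apply: (continuous_comp (f := fst)); first exact: cvg_fst.
  exact: cvg_snd.
Qed.

End Aux.
Import Aux.
Import numFieldNormedType.Exports.

Theorem proposition5 (R : realType) (N : nat) (x : nat -> R) (m : nat)
  (r1d r3d pd r2d ld : 'I_(m.-1) -> R) (c d v1 v2 : 'cV[R]_(N.-2)) (D : R) :
  (3 <= N)%N ->
  (forall i, (i.+1 < N)%N -> x i < x i.+1) ->
  (1 <= m)%N ->
  (forall k, inF N x (r1d k) (r3d k) (pd k)) ->
  (forall k, xlow x <= r2d k <= xup N x) ->
  (forall k, ld k = 1 \/ ld k = -1) ->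
  analytic_center x r1d r3d pd r2d ld c ->
  longest_axis_dir x r1d r3d pd r2d ld c d ->
  boundaryV x r1d r3d pd r2d ld v1 -> on_line c d v1 ->
  boundaryV x r1d r3d pd r2d ld v2 -> on_line c d v2 ->
  v1 != v2 ->
  0 < D <= 1 ->
  (exists M, is_max (fun r2 => xlow x <= r2 <= xup N x /\
                               dotc (Rmap c) (GB N x r2) <= D)
                    (fun r2 => dotc (Rmap v1) (GB N x r2)) M /\
             is_max (fun r2 => xlow x <= r2 <= xup N x /\
                               dotc (Rmap c) (GB N x r2) = D)
                    (fun r2 => dotc (Rmap v1) (GB N x r2)) M) /\
  (exists M, is_max (fun q : R * R * R => inF N x q.1.1 q.1.2 q.2 /\
                               dotc (Rmap c) (GA N x q.1.1 q.1.2 q.2) <= D)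
                    (fun q => dotc (Rmap v2) (GA N x q.1.1 q.1.2 q.2)) M /\
             is_max (fun q : R * R * R => inF N x q.1.1 q.1.2 q.2 /\
                               dotc (Rmap c) (GA N x q.1.1 q.1.2 q.2) = D)
                    (fun q => dotc (Rmap v2) (GA N x q.1.1 q.1.2 q.2)) M).
Proof.
move=> N3 hx _ _ _ _ _ _ [[v1ge v1s _] _] _ [[v2ge v2s _] _] _ _ /andP[D0 D1].
have N2 : (2 <= N)%N by apply: ltnW.
have lu : xlow x <= xup N x.
  by apply: (xmono hx); [exact: leq0n | case: (N) N2].
set Fc := fun t => dotc (@Rmap R N c) (gvec N x t).
have cFc : continuous Fc by apply: Fv_cont.
have Fcup : Fc (xup N x) = 1 by apply: Fv_up.
have Fclow : Fc (xlow x) = 0 by apply: Fv_low.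
have R1 := Rmap_ge0 v1ge v1s.
have R2 := Rmap_ge0 v2ge v2s.
split.
- set F1 := fun t => dotc (@Rmap R N v1) (gvec N x t).
  have cF1 : continuous F1 by apply: Fv_cont.
  set A := (`[xlow x, xup N x] `&` (Fc @^-1` [set y | y <= D]))%classic.
  have cA : compact A.
    apply: compact_closedI; first exact: segment_compact.
    by apply: preimage_closed; [move=> t _; exact: cFc | exact: closed_le].
  have A0 : (A !=set0)%classic.
    exists (xlow x); split; first by rewrite /= in_itv /= lexx lu.
    by rewrite /= Fclow ltW.
  have cw : {within A, continuous F1}%classic by apply: continuous_subspaceT.
  have [r rA rmax] := compact_EVT_max A0 cA cw.
  move: rA; rewrite inE => -[]; rewrite /= in_itv /= => /andP[ra rb] rD.
  have [r' r'in Fr'] : exists2 r', r' \in `[r, xup N x] & Fc r' = D.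
    apply: IVT => //; first exact: continuous_subspaceT.
    by rewrite Fcup ge_min rD /= le_max D1 orbT.
  move: r'in; rewrite in_itv /= => /andP[rr' r'u].
  have r'A : r' \in A.
    by rewrite inE; split; [rewrite /= in_itv /= r'u (le_trans ra rr') | rewrite /= Fr'].
  have mx : F1 r <= F1 r' by apply: Fv_mono.
  have mx2 : F1 r' <= F1 r by apply: rmax.
  exists (F1 r'); split; split.
  + by exists r'; split => //; split; [rewrite (le_trans ra rr') r'u | by have := Fr'; rewrite /Fc /GB => ->].
  + move=> y [yb yD]; apply: le_trans mx; apply: rmax; rewrite inE.
    by split; [rewrite /= in_itv /= yb | exact: yD].
  + by exists r'; split => //; split; [rewrite (le_trans ra rr') r'u | by have := Fr'; rewrite /Fc /GB => ->].
  + move=> y [yb yD]; apply: le_trans mx; apply: rmax; rewrite inE.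
    split; first by rewrite /= in_itv /= yb.
    by have := yD; rewrite /= /Fc /GB => ->.
- set F2 := fun t => dotc (@Rmap R N v2) (gvec N x t).
  have cF2 : continuous F2 by apply: Fv_cont.
  have F2m : forall t s, t <= s -> F2 t <= F2 s by move=> t s ts; apply: Fv_mono.
  set hc := fun q : R * R * R => (1 - q.2) * Fc q.1.1 + q.2 * Fc q.1.2.
  set ov := fun q : R * R * R => (1 - q.2) * F2 q.1.1 + q.2 * F2 q.1.2.
  have chc : continuous hc by apply: cont3.
  have cov : continuous ov by apply: cont3.
  have hcE : forall q : R * R * R, dotc (Rmap c) (GA N x q.1.1 q.1.2 q.2) = hc q.
    by move=> q; rewrite dotc_GA.
  have ovE : forall q : R * R * R, dotc (Rmap v2) (GA N x q.1.1 q.1.2 q.2) = ov q.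
    by move=> q; rewrite dotc_GA.
  set A := (((`[xlow x, xup N x] `*` `[xlow x, xup N x]) `*` `[0, 1])
            `&` ([set q : R * R * R | 0 <= q.1.2 - q.1.1] `&` (hc @^-1` [set y | y <= D])))%classic.
  have memA : forall q : R * R * R, A q <-> inF N x q.1.1 q.1.2 q.2 /\ hc q <= D.
    case=> [[r1 r3] p]; rewrite /A /inF /= !in_itv /= subr_ge0; split.
      by move=> [[[/andP[-> ->] /andP[-> ->]] /andP[-> ->]] [-> ->]].
    by move=> [[/andP[-> ->] /andP[-> ->] /andP[-> ->] ->] ->].
  have cA : compact A.
    apply: compact_closedI.
      by apply: compact_setX; [apply: compact_setX|]; exact: segment_compact.
    apply: closedI.
      apply: (@preimage_closed _ _ (fun q : R * R * R => q.1.2 - q.1.1) [set y : R | 0 <= y])%classic; last exact: closed_ge.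
      move=> q _; apply: cvgB.
        apply: (continuous_comp (f := fst)); first exact: cvg_fst.
        exact: cvg_snd.
      apply: (continuous_comp (f := fst)); first exact: cvg_fst.
      exact: cvg_fst.
    by apply: preimage_closed; [move=> q _; exact: chc | exact: closed_le].
  have A0 : (A !=set0)%classic.
    exists (xlow x, xlow x, 0); apply/memA; split.
      by split; rewrite ?lexx ?lu ?ler01.
    by rewrite /hc /= Fclow !mulr0 addr0 ltW.
  have cw : {within A, continuous ov}%classic by apply: continuous_subspaceT.
  have [[[r1 r3] p] /set_mem/memA[[/andP[l1 u1] /andP[l3 u3] /andP[p0 p1] r13] hD] omax]
    := compact_EVT_max A0 cA cw.
  have [q' [q'F q'D q'ge]] : exists q' : R * R * R,
      [/\ inF N x q'.1.1 q'.1.2 q'.2, hc q' = D & ov (r1, r3, p) <= ov q'].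
    have p10 : 0 <= 1 - p by rewrite subr_ge0.
    have [hge|hlt] := leP D ((1 - p) * Fc r1 + p).
    + have [r' r'in Fr'] : exists2 r', r' \in `[r3, xup N x] &
          (1 - p) * Fc r1 + p * Fc r' = D.
        apply: IVT => //.
          apply: continuous_subspaceT => t; apply: cvgD; first exact: cvg_cst.
          by apply: cvgM; [exact: cvg_cst | exact: cFc].
        rewrite Fcup mulr1 ge_min le_max hge orbT andbT.
        by move: hD; rewrite /hc /= => ->.
      move: r'in; rewrite in_itv /= => /andP[r3r' r'u].
      exists (r1, r', p); split => //.
        by split; rewrite ?l1 ?u1 ?p0 ?p1 ?r'u ?(le_trans l3 r3r') ?(le_trans r13 r3r').
      by rewrite /ov /= lerD2l ler_wpM2l // F2m.
    + have [r' r'in Fr'] : exists2 r', r' \in `[r1, xup N x] &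
          (1 - p) * Fc r' + p * Fc (xup N x) = D.
        apply: IVT => //.
          apply: continuous_subspaceT => t; apply: cvgD; last exact: cvg_cst.
          by apply: cvgM; [exact: cvg_cst | exact: cFc].
        rewrite Fcup !mulr1 subrK le_max D1 orbT andbT ge_min.
        by rewrite (ltW hlt).
      move: r'in; rewrite in_itv /= => /andP[r1r' r'u].
      exists (r', xup N x, p); split => //.
        by split; rewrite ?lexx ?lu ?p0 ?p1 ?r'u ?(le_trans l1 r1r').
      by rewrite /ov /= lerD ?ler_wpM2l // F2m.
  have q'A : q' \in A by apply/mem_set/memA; split => //; rewrite q'D.
  have q'max : ov q' <= ov (r1, r3, p) by apply: omax.
  exists (ov q'); split; split.
  + by exists q'; split; [split; rewrite // hcE q'D | rewrite ovE].
  + move=> y [yF yD]; rewrite ovE; apply: le_trans q'ge; apply: omax.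
    by apply/mem_set/memA; split => //; rewrite -hcE.
  + by exists q'; split; [split; rewrite // hcE q'D | rewrite ovE].
  + move=> y [yF yD]; rewrite ovE; apply: le_trans q'ge; apply: omax.
    by apply/mem_set/memA; split => //; rewrite -hcE yD.
Qed.
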